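(* Let $\epsilon>0$ and let $C,D$ be symmetric positive-definite $n\times n$ matrices. Then $$\frac4\epsilon D^{1/2}\left(I+\left(I+\frac{16}{\epsilon^2}D^{1/2}CD^{1/2}\right)^{1/2}\right)^{-1}D^{1/2}=I-\frac\epsilon4C^{-1/2}\left(I+\frac4\epsilon C-\left(I+\frac{16}{\epsilon^2}C^{1/2}DC^{1/2}\right)^{1/2}\right)C^{-1/2}.$$
   Context: Square roots of symmetric positive-definite matrices are the principal (symmetric positive-definite) square roots. *)

(* Defs.v *)
From HB Require Import structures.
From mathcomp Require Import all_boot all_order all_algebra.
From mathcomp Require Import reals.
From Stdlib Require Import ClassicalEpsilon.
Set Implicit Arguments. Unset Strict Implicit. Unset Printing Implicit Defensive.
Import Order.TTheory GRing.Theory Num.Theory.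
Local Open Scope ring_scope.

Definition symmetricmx (R : realType) (n : nat) (A : 'M[R]_n) : Prop :=
  A^T = A.

Definition spd (R : realType) (n : nat) (A : 'M[R]_n) : Prop :=
  symmetricmx A /\ forall x : 'cV[R]_n, x != 0 -> 0 < (x^T *m A *m x) 0 0.

(* Principal square root: the (unique) symmetric positive-definite S with
   S * S = A; chosen by Hilbert's epsilon (defaults to 0 if none exists). *)
Definition sqrtm (R : realType) (n : nat) (A : 'M[R]_n) : 'M[R]_n :=
  epsilon (inhabits 0) (fun S : 'M[R]_n => spd S /\ S *m S = A).

(* Main.v *)
Require Import Defs.
From HB Require Import structures.
From mathcomp Require Import all_boot all_order all_algebra.
From mathcomp Require Import reals complex.
From Stdlib Require Import ClassicalEpsilon.
Import Order.TTheory GRing.Theory Num.Theory.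
Local Open Scope ring_scope.
From mathcomp Require Import lra.
Section Real.
Context {R : realType}.
Context {n : nat}.
Implicit Types (X Y Z M : 'M[R]_n) (x y : 'cV[R]_n).

Definition qf X x : R := (x^T *m X *m x) 0 0.

Lemma qf0 X : qf X 0 = 0.
Proof. by rewrite /qf mulmx0 mxE. Qed.

Lemma qf_ge0 X x : spd X -> 0 <= qf X x.
Proof.
move=> [_ hX]; have [->|nz] := eqVneq x 0; first by rewrite qf0.
exact/ltW/hX.
Qed.

Lemma qf1E y : qf 1%:M y = \sum_i y i 0 ^+ 2.
Proof.
rewrite /qf mulmx1 mxE; apply: eq_bigr => i _; by rewrite !mxE expr2.
Qed.

Lemma qf1_gt0 y : y != 0 -> 0 < qf 1%:M y.
Proof.
move=> nz; rewrite qf1E.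
have [i hi] : exists i, y i 0 != 0.
  apply/existsP; apply: contraR nz; rewrite negb_exists => /forallP h.
  apply/eqP/matrixP => i j; rewrite ord1 mxE; exact/eqP/negbNE/h.
rewrite (bigD1 i) //=.
have h1 : 0 < y i 0 ^+ 2 by rewrite lt0r sqr_ge0 sqrf_eq0 hi.
have h2 : 0 <= \sum_(j | j != i) y j 0 ^+ 2 by apply: sumr_ge0 => j _; exact: sqr_ge0.
lra.
Qed.

Lemma qf1_ge0 y : 0 <= qf 1%:M y.
Proof. by rewrite qf1E; apply: sumr_ge0 => j _; exact: sqr_ge0. Qed.

Lemma qfD X Y x : qf (X + Y) x = qf X x + qf Y x.
Proof. by rewrite /qf mulmxDr mulmxDl mxE. Qed.

Lemma qfZ c X x : qf (c *: X) x = c * qf X x.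
Proof. by rewrite /qf -scalemxAr -scalemxAl mxE. Qed.

Lemma qfMM M x : qf (M *m M^T) x = qf 1%:M (M^T *m x).
Proof. by rewrite /qf mulmx1 trmx_mul trmxK !mulmxA. Qed.

Lemma trace_qf X Z : \tr (Z^T *m X *m Z) = \sum_j qf X (col j Z).
Proof.
rewrite /mxtrace; apply: eq_bigr => j _; rewrite /qf tr_col.
rewrite -row_mul !mxE; apply: eq_bigr => k _; by rewrite !mxE.
Qed.

Lemma sylv X Y Z : spd X -> spd Y -> X *m Z + Z *m Y = 0 -> Z = 0.
Proof.
move=> hX hY e.
have eXZ : X *m Z = - (Z *m Y) by apply/eqP; rewrite -subr_eq0 opprK e.
have h : \tr (Z^T *m X *m Z) + \tr (Z^T^T *m Y *m Z^T) = 0.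
  rewrite trmxK -mulmxA eXZ mulmxN linearN /= mulmxA mxtrace_mulC.
  have -> : \tr (Y *m (Z^T *m Z)) = \tr (Z *m Y *m Z^T) by rewrite mulmxA mxtrace_mulC mulmxA.
  by rewrite addNr.
rewrite !trace_qf in h.
have g1 : 0 <= \sum_j qf X (col j Z) by apply: sumr_ge0 => j _; exact: qf_ge0.
have g2 : 0 <= \sum_j qf Y (col j Z^T) by apply: sumr_ge0 => j _; exact: qf_ge0.
have h0 : \sum_j qf X (col j Z) = 0 by lra.
have hc : forall j, col j Z = 0.
  move=> j; have := @psumr_eq0P _ _ xpredT _ (fun j _ => qf_ge0 X (col j Z) hX) h0 j isT.
  case: hX => _ hX; have [//|nz] := eqVneq (col j Z) 0.
  by move=> E; move: (hX _ nz); rewrite -/(qf X _) E ltxx.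
apply/matrixP => i j; have := congr1 (fun v : 'cV[R]_n => v i 0) (hc j).
by rewrite !mxE.
Qed.

Lemma spd_unit X : spd X -> X \in unitmx.
Proof.
move=> [hs hX]; rewrite unitmxE unitfE; apply/negP => /det0P [v nz hv].
have : v^T != 0 by rewrite trmx_eq0.
move=> /hX; rewrite trmxK hv mul0mx mxE; by rewrite ltxx.
Qed.

Lemma spd_1pc M c : 0 <= c -> spd (1%:M + c *: (M *m M^T)).
Proof.
move=> hc; split.
  by rewrite /Defs.symmetricmx linearD /= trmx1 linearZ /= trmx_mul trmxK.
move=> x nz; rewrite -/(qf _ x) qfD qfZ qfMM.
have := qf1_gt0 x nz; have := qf1_ge0 (M^T *m x).
move=> a b; have := mulr_ge0 hc a; lra.
Qed.

Lemma spd_1p X : spd X -> spd (1%:M + X).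
Proof.
move=> [hs hX]; split.
  by move: hs; rewrite /Defs.symmetricmx linearD /= trmx1 => ->.
move=> x nz; rewrite -/(qf _ x) qfD; have := qf1_gt0 x nz; have := hX x nz.
rewrite -/(qf _ x); lra.
Qed.

End Real.

Section Exist.
Context {R : realType} {n : nat}.
Local Open Scope sesquilinear_scope.
Local Notation C := (R[i]).
Local Notation phi := (real_complex R).

Lemma conj_phi (r : R) : Num.conj (phi r) = phi r.
Proof. by apply/CrealP; rewrite complex_real. Qed.

Lemma phi_real (r : R) : phi r \is Num.real.
Proof. by rewrite complex_real. Qed.

Lemma diag_comm_fun (W : 'M[C]_n) (d : 'rV[C]_n) (g : C -> C) :
  W *m diag_mx d = diag_mx d *m W ->
  W *m diag_mx (map_mx g d) = diag_mx (map_mx g d) *m W.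
Proof.
move=> /matrixP h; apply/matrixP => i j; have := h i j.
rewrite !mul_mx_diag !mul_diag_mx !mxE => e.
have [->|nz] := eqVneq (W i j) 0; first by rewrite mulr0 mul0r.
have : d 0 j = d 0 i.
  by apply: (mulfI nz); rewrite e mulrC.
by move=> ->; rewrite mulrC.
Qed.

Variable A : 'M[R]_n.
Hypothesis hA : spd A.

Let Ac := map_mx phi A.

Lemma Ac_herm : Ac \is hermsymmx.
Proof.
apply/is_hermitianmxP; rewrite expr0 scale1r; apply/matrixP => i j.
case: hA; rewrite /Defs.symmetricmx => hs _.
by rewrite !mxE conj_phi -[A j i](congr1 (fun M : 'M[R]_n => M j i) hs) mxE.
Qed.


Let U := spectralmx Ac.
Let d := spectral_diag Ac.
Let V := U^t*.

Lemma UV : U *m V = 1%:M.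
Proof. exact/unitarymxP/spectral_unitarymx. Qed.

Lemma VU : V *m U = 1%:M.
Proof. exact/mulmx1C/UV. Qed.

Lemma Ac_dec : Ac = V *m diag_mx d *m U.
Proof.
have := orthomx_spectralP (hermitian_normalmx Ac_herm).
by rewrite invmx_unitary ?spectral_unitarymx.
Qed.

Lemma d_real j : d 0 j \is Num.real.
Proof. exact: (mxOverP (hermitian_spectral_diag_real Ac_herm)). Qed.

Lemma d_pos j : 0 < complex.Re (d 0 j).
Proof.
set r := complex.Re (d 0 j).
have dj : phi r = d 0 j := RRe_real (d_real j).
rewrite ltNge; apply/negP => hr.
have hdet : \det (A - r%:M) = 0.
  apply/eqP; rewrite -(fmorph_eq0 phi) -det_map_mx map_mxB map_scalar_mx /= dj.
  have -> : map_mx phi A - (d 0 j)%:M = V *m (diag_mx d - (d 0 j)%:M) *m U.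
    by rewrite mulmxBr mulmxBl -Ac_dec mul_mx_scalar -scalemxAl VU scalemx1.
  have -> : diag_mx d - (d 0 j)%:M = diag_mx (d - const_mx (d 0 j)).
    by apply/matrixP => a b; rewrite !mxE mulrnBl.
  rewrite !det_mulmx det_diag (bigD1 j) //= !mxE subrr mul0r mulr0 mul0r.
  by [].
have [v nz hv] : exists2 v : 'rV[R]_n, v != 0 & v *m (A - r%:M) = 0.
  by apply/det0P/eqP.
have vA : v *m A = r *: v.
  by apply/eqP; rewrite -subr_eq0 -mul_mx_scalar -mulmxBr hv.
case: hA => _ hpos.
have := hpos v^T; rewrite trmx_eq0 => /(_ nz).
rewrite trmxK vA -scalemxAl mxE => h.
have := qf1_ge0 v^T; rewrite /qf mulmx1 trmxK => h2.
have := mulr_le0_ge0 hr h2; lra.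
Qed.

Let g (z : C) : C := phi (Num.Def.sqrtr (complex.Re z)).
Let s := map_mx g d.
Let Sc := V *m diag_mx s *m U.
Let Ub := map_mx Num.conj U.

Lemma ss : diag_mx s *m diag_mx s = diag_mx d.
Proof.
apply/matrixP => a b; rewrite mul_diag_mx !mxE.
case: eqP => [->|_]; rewrite ?mulr0n ?mulr1n ?mulr0 //.
rewrite /g -rmorphM /= -expr2 sqr_sqrtr ?RRe_real ?d_real //.
exact/ltW/d_pos.
Qed.

Lemma ScSc : Sc *m Sc = Ac.
Proof.
have -> : Sc *m Sc = V *m (diag_mx s *m (U *m V) *m diag_mx s) *m U.
  by rewrite /Sc !mulmxA.
by rewrite UV mulmx1 ss -Ac_dec.
Qed.


Lemma conj_conj m k (M : 'M[C]_(m, k)) : map_mx Num.conj (map_mx Num.conj M) = M.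
Proof. by rewrite -map_mx_comp map_mx_id // => x; exact: conjCK. Qed.

Lemma Vconj : map_mx Num.conj V = U^T.
Proof. exact: conj_conj. Qed.

Lemma VT : V^T = Ub.
Proof. by rewrite /V map_trmx trmxK. Qed.

Lemma UbUT : Ub *m U^T = 1%:M.
Proof. by rewrite -Vconj /Ub -map_mxM UV map_mx1. Qed.

Lemma UTUb : U^T *m Ub = 1%:M.
Proof. by rewrite -Vconj /Ub -map_mxM VU map_mx1. Qed.

Lemma Ac_conj : map_mx Num.conj Ac = Ac.
Proof. by apply/matrixP => a b; rewrite !mxE conj_phi. Qed.

Lemma d_conj : map_mx Num.conj d = d.
Proof. exact/realmxC/hermitian_spectral_diag_real/Ac_herm. Qed.

Lemma s_conj : map_mx Num.conj s = s.
Proof. by apply/matrixP => a b; rewrite !mxE conj_phi. Qed.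

Lemma Ac_dec2 : Ac = U^T *m diag_mx d *m Ub.
Proof.
by rewrite -{1}Ac_conj {1}Ac_dec !map_mxM Vconj map_diag_mx d_conj.
Qed.

Lemma Wcomm : (Ub *m V) *m diag_mx s = diag_mx s *m (Ub *m V).
Proof.
apply: diag_comm_fun.
have e1 : Ub *m Ac *m V = Ub *m V *m diag_mx d.
  by rewrite {1}Ac_dec -!mulmxA UV mulmx1.
have e2 : Ub *m Ac *m V = diag_mx d *m (Ub *m V).
  by rewrite Ac_dec2 !mulmxA UbUT mul1mx.
by rewrite -e1 -e2.
Qed.

Lemma Sc_conj : map_mx Num.conj Sc = Sc.
Proof.
rewrite /Sc !map_mxM Vconj map_diag_mx s_conj -/Ub.
rewrite -[U^T *m diag_mx s *m Ub]mulmx1 -VU.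
have -> : U^T *m diag_mx s *m Ub *m (V *m U) = U^T *m (diag_mx s *m (Ub *m V)) *m U.
  by rewrite !mulmxA.
by rewrite -Wcomm !mulmxA UTUb mul1mx.
Qed.

Lemma Sc_tr : Sc^T = Sc.
Proof.
rewrite -{2}Sc_conj /Sc !trmx_mul tr_diag_mx VT !map_mxM Vconj map_diag_mx s_conj.
by rewrite !mulmxA.
Qed.

Lemma Sc_realE : map_mx phi (map_mx (@complex.Re R) Sc) = Sc.
Proof.
apply/matrixP => a b; rewrite 2!mxE; apply: RRe_real; apply/CrealP.
by have := congr1 (fun M : 'M[C]_n => M a b) Sc_conj; rewrite 1!mxE.
Qed.

Lemma sqrt_ex_aux : exists S : 'M[R]_n, spd S /\ S *m S = A.
Proof.
set S := map_mx (@complex.Re R) Sc.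
have phiinj : injective (map_mx phi : 'M[R]_n -> 'M[C]_n) := map_mx_inj.
exists S; split; last first.
  by apply: phiinj; rewrite map_mxM Sc_realE ScSc.
split.
  by apply: phiinj; rewrite -map_trmx Sc_realE Sc_tr.
move=> x nz.
set xc := map_mx phi x.
rewrite -ltcR.
have e : phi ((x^T *m S *m x) 0 0) = (xc^T *m Sc *m xc) 0 0.
  by rewrite -Sc_realE /xc map_trmx -(map_mxM phi x^T S) -(map_mxM phi (x^T *m S) x) [RHS]mxE.
rewrite e rmorph0.
set y := U *m xc.
have xcT : xc^T *m V = y ^t*.
  rewrite /y trmx_mul map_mxM -map_trmx; congr (_ *m _).
  by apply/matrixP => a b; rewrite !mxE; exact: (esym (conj_phi _)).
have -> : xc^T *m Sc *m xc = y^t* *m diag_mx s *m y.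
  by rewrite /Sc !mulmxA xcT.
have ynz : y != 0.
  apply: contraNneq nz => y0; rewrite -(map_mx_eq0 phi) -/xc.
  by rewrite -[xc]mul1mx -VU -mulmxA -/y y0 mulmx0.
have [k hk] : exists k, y k 0 != 0.
  apply/existsP; apply: contraR ynz; rewrite negb_exists => /forallP h.
  apply/eqP/matrixP => a b; rewrite ord1 [RHS]mxE; exact/eqP/negbNE/h.
clearbody y.
rewrite mxE (bigD1 k) //= ltr_wpDr //.
  apply: sumr_ge0 => a _; rewrite mul_mx_diag !mxE mulrAC mulrC [_^* * _]mulrC.
  by apply: mulr_ge0; [rewrite /g ler0c sqrtr_ge0 | exact: mul_conjC_ge0].
rewrite mul_mx_diag !mxE mulrAC mulrC [_^* * _]mulrC.
apply: mulr_gt0; last by rewrite mul_conjC_gt0.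
by rewrite /g ltcR sqrtr_gt0 d_pos.
Qed.

End Exist.

Lemma sqrt_ex (R : realType) (n : nat) (A : 'M[R]_n) :
  spd A -> exists S : 'M[R]_n, spd S /\ S *m S = A.
Proof. move=> hA; exact: (@sqrt_ex_aux R n A hA). Qed.
Arguments sqrt_ex {R n A}.

Lemma sqrtm_spec (R : realType) (n : nat) (A : 'M[R]_n) :
  spd A -> spd (sqrtm A) /\ sqrtm A *m sqrtm A = A.
Proof.
move=> hA; rewrite /sqrtm; exact: (epsilon_spec (inhabits 0) _ (sqrt_ex hA)).
Qed.
Arguments sqrtm_spec {R n A}.

Theorem lemma1 (R : realType) (n : nat) (eps : R) (C D : 'M[R]_n) :
  0 < eps -> spd C -> spd D ->
  (4 / eps) *: (sqrtm D *m
     invmx (1%:M + sqrtm (1%:M + (16 / eps ^+ 2) *: (sqrtm D *m C *m sqrtm D)))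
     *m sqrtm D)
  = 1%:M - (eps / 4) *: (invmx (sqrtm C) *m
       (1%:M + (4 / eps) *: C
          - sqrtm (1%:M + (16 / eps ^+ 2) *: (sqrtm C *m D *m sqrtm C)))
       *m invmx (sqrtm C)).
Proof.
move=> heps hC hD.
have [hP PP] := sqrtm_spec hD; have [hQ QQ] := sqrtm_spec hC.
set P := sqrtm D in hP PP *; set Q := sqrtm C in hQ QQ *.
set t := 4 / eps.
have ht : 0 < t by rewrite /t divr_gt0.
have hc : 16 / eps ^+ 2 = t ^+ 2.
  by rewrite /t expr_div_n; congr (_ / _); rewrite expr2 -natrM.
have he : eps / 4 = t^-1 by rewrite /t invf_div.
have Ps : P^T = P by case: hP.
have Qs : Q^T = Q by case: hQ.
set M := P *m Q.
have MT : M^T = Q *m P by rewrite trmx_mul Ps Qs.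
have PCP : P *m C *m P = M *m M^T by rewrite MT /M -QQ !mulmxA.
have QDQ : Q *m D *m Q = M^T *m M by rewrite MT /M -PP !mulmxA.
rewrite hc he PCP QDQ.
have hA1 := spd_1pc M _ (ltW (exprn_gt0 2 ht)).
have hA2 := spd_1pc M^T _ (ltW (exprn_gt0 2 ht)); rewrite trmxK in hA2.
have [hX XX] := sqrtm_spec hA1; have [hY YY] := sqrtm_spec hA2.
set X := sqrtm _ in hX XX *; set Y := sqrtm _ in hY YY *.
have XM : X *m M = M *m Y.
  apply/eqP; rewrite -subr_eq0; apply/eqP; apply: (sylv X Y _ hX hY).
  rewrite mulmxBr mulmxBl mulmxA XX -[M *m Y *m Y]mulmxA YY -[X *m M *m Y]mulmxA addrA addrNK.
  rewrite mulmxDl mulmxDr mul1mx mulmx1 -scalemxAl -scalemxAr !mulmxA.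
  by rewrite subrr.
have uX := spd_unit _ (spd_1p _ hX); have uY := spd_unit _ (spd_1p _ hY).
have uQ := spd_unit _ hQ.
have XM1 : (1%:M + X) *m M = M *m (1%:M + Y).
  by rewrite mulmxDl mulmxDr mul1mx mulmx1 XM.
have key : invmx (1%:M + X) *m M = M *m invmx (1%:M + Y).
  by rewrite -[LHS](mulmxK uY) -[invmx _ *m M *m _]mulmxA -XM1 mulKmx.
have inj : forall Z1 Z2, Q *m Z1 *m Q = Q *m Z2 *m Q -> Z1 = Z2.
  move=> Z1 Z2 /(congr1 (fun Z => invmx Q *m Z *m invmx Q)) /=.
  by rewrite !mulmxA !mulmxK // mulVmx // !mul1mx.
apply: inj.
have L : Q *m (t *: (P *m invmx (1%:M + X) *m P)) *m Q
    = t *: (M^T *m M *m invmx (1%:M + Y)).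
  rewrite -scalemxAr -scalemxAl; congr (_ *: _).
  have -> : Q *m (P *m invmx (1%:M + X) *m P) *m Q = M^T *m (invmx (1%:M + X) *m M).
    by rewrite MT /M !mulmxA.
  by rewrite key mulmxA.
have Rr : Q *m (1%:M - t^-1 *: (invmx Q *m (1%:M + t *: C - Y) *m invmx Q)) *m Q
    = t^-1 *: (Y - 1%:M).
  rewrite mulmxBr mulmxBl mulmx1 QQ -scalemxAr -scalemxAl !mulmxA mulmxV //.
  rewrite mul1mx mulmxKV // scalerBr scalerDr scalerA mulVf ?gt_eqF // scale1r.
  rewrite [in RHS]scalerBr; set a := t^-1 *: 1%:M; set b := t^-1 *: Y.
  by rewrite [a + C]addrC -addrA opprD addrA subrr add0r opprB.
rewrite L Rr.
apply: (can_inj (mulmxK uY)) => /=.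
rewrite -scalemxAl mulmxKV // -scalemxAl mulmxBl mulmxDr mulmx1 mul1mx YY.
have -> : Y + (1%:M + t ^+ 2 *: (M^T *m M)) - (1%:M + Y) = t ^+ 2 *: (M^T *m M).
  by rewrite [Y + _]addrC [1%:M + Y]addrC addrKA [1%:M + _]addrC addrK.
by rewrite scalerA expr2 mulKf ?gt_eqF.
Qed.
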